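(* Let $\mathbf b_i\in\mathcal B_k$ be a boundary point of $P(A)$. Let $\beta_1,\dots,\beta_{R_k+1}$ be the elements of $\{1/\ell_0,2/\ell_0,\dots,\ell_0/\ell_0\}$ not of the form $1-s_0^{(j)}/\ell_0$ with $\mathbf b_j\in\mathcal B_k$ a boundary point of $P(A)$ and $\mathbf b_j\neq\mathbf b_i$ (one may take $\beta_1=1$), and let $\alpha_1,\dots,\alpha_{R_k+1}$ be the elements remaining on the list $\frac{v^{(i)}_r+\sigma}{\ell_r}$ ($r=1,\dots,m$, $\sigma=0,\dots,\ell_r-1$) after one copy of each element $1-s_0^{(j)}/\ell_0$ with $\mathbf b_j\in\mathcal B_k$ a boundary point of $P(A)$, $\mathbf b_j\ne\mathbf b_i$, has been removed. Then the $R_k+1$ series $F^{(\mathbf b_j)}_{\mathbf b_i}(\lambda)$ with $\mathbf b_j\in\mathcal B_k$ either an interior point of $P(A)$ or equal to $\mathbf b_i$ are obtained from a full set of solutions at $x=0$ of the hypergeometric operator \[(\delta_x+\beta_1-1)\cdots(\delta_x+\beta_{R_k+1}-1)-x(\delta_x+\alpha_1)\cdots(\delta_x+\alpha_{R_k+1}),\qquad\delta_x=x\tfrac{d}{dx},\] by replacing $x$ by $\lambda^{\ell_0}$; that is, $F^{(\mathbf b_j)}_{\mathbf b_i}(\lambda)=H_j(\lambda^{\ell_0})$ where the $H_j(x)$ (formal series in $x^{s_0^{(j)}/\ell_0}\mathbb C[[x]]$) form a full set of solutions of this operator at $x=0$.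
   Context: Let $A=\{\mathbf a_1,\dots,\mathbf a_m\}\subseteq\mathbb Z^n$ be linearly independent over $\mathbb R$, $\mathbf a_0\in\mathbb Z^n$, and $\ell_0,\dots,\ell_m$ positive integers with gcd $1$, $\ell_0\mathbf a_0=\sum_{j=1}^m\ell_j\mathbf a_j$, $\ell_0=\sum_{j=1}^m\ell_j$. Let $\mathbb ZA$, $\mathbb ZA_+$ be the groups generated by $A$ and $A\cup\{\mathbf a_0\}$. Let $V$ be the real span of $A$, $V_{\mathbb Z}=V\cap\mathbb Z^n$, $P(A)=\{\sum_jc_j\mathbf a_j:0\le c_j<1\}$, $\mathcal B=V_{\mathbb Z}\cap P(A)$. Each $\mathbf b\in\mathcal B$ is written uniquely $\mathbf b=\sum_rv_r\mathbf a_r$ with $v_r\in[0,1)$; $\mathbf b$ is an interior point of $P(A)$ if all $v_r>0$ and a boundary point otherwise. Fix a coset $\mathcal C_k$ of $\mathbb ZA_+$ in $V_{\mathbb Z}$, put $\mathcal B_k=\mathcal B\cap\mathcal C_k$ (it has $\ell_0$ elements), and let $R_k$ be the number of interior points of $P(A)$ in $\mathcal B_k$. Fix $\mathbf b_i\in\mathcal B_k$. For $\mathbf b_j\in\mathcal B_k$ write $\mathbf b_j=\sum_rv^{(j)}_r\mathbf a_r$, let $s_0^{(j)}\in\{0,\dots,\ell_0-1\}$ be the unique element with $\mathbf b_i+s_0^{(j)}\mathbf a_0\equiv\mathbf b_j\pmod{\mathbb ZA}$, and let $s^{(j)}_r\in\mathbb Z$ ($r=1,\dots,m$) be determined by $\mathbf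 b_i+s_0^{(j)}\mathbf a_0=\mathbf b_j-\sum_rs^{(j)}_r\mathbf a_r$. Define \[F^{(\mathbf b_j)}_{\mathbf b_i}(\lambda)=\lambda^{s_0^{(j)}}\sum_{s=0}^\infty\frac{\prod_{r=1}^m\prod_{\sigma=0}^{\ell_r-1}\big(\frac{v^{(j)}_r-s^{(j)}_r+\sigma}{\ell_r}\big)_s}{\prod_{t=1}^{\ell_0}\big(\frac{s^{(j)}_0+t}{\ell_0}\big)_s}\lambda^{s\ell_0},\] with $(a)_s=a(a+1)\cdots(a+s-1)$. *)

(* Defs.v *)
From HB Require Import structures.
From mathcomp Require Import all_boot all_order all_algebra.
Set Implicit Arguments. Unset Strict Implicit. Unset Printing Implicit Defensive.
Import Order.TTheory GRing.Theory Num.Theory.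
Local Open Scope ring_scope.

Definition ratv (n : nat) (b : 'rV[int]_n) : 'rV[rat]_n :=
  map_mx (fun z : int => z%:~R) b.

Definition Amx (n m : nat) (a : 'I_m -> 'rV[int]_n) : 'M[rat]_(m, n) :=
  \matrix_(r < m) ratv (a r).

Definition inZAplus (n m : nat) (a : 'I_m -> 'rV[int]_n) (a0 : 'rV[int]_n)
  (x : 'rV[int]_n) : Prop :=
  exists (z0 : int) (z : 'I_m -> int), x = a0 *~ z0 + \sum_(r < m) a r *~ z r.

Definition PA_coords (n m : nat) (a : 'I_m -> 'rV[int]_n) (b : 'rV[int]_n)
  (v : 'I_m -> rat) : Prop :=
  ratv b = \sum_(r < m) v r *: ratv (a r) /\ forall r, 0 <= v r < 1.

Definition inB (n m : nat) (a : 'I_m -> 'rV[int]_n) (b : 'rV[int]_n) : Prop :=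
  exists v : 'I_m -> rat, PA_coords a b v.

Definition interiorb (n m : nat) (v : 'rV[int]_n -> 'I_m -> rat) (b : 'rV[int]_n)
  : bool := [forall r, 0 < v b r].

Definition poch (R : pzRingType) (x : R) (s : nat) : R := \prod_(i < s) (x + i%:R).

(* Formal power series in lambda are coefficient sequences nat -> R.
   A series H(x) in x^{e/l0} C[[x]] is identified with H(lambda^l0), i.e. with
   its coefficient sequence in powers of lambda = x^{1/l0}. *)

Definition Fcoef (R : numFieldType) (m : nat) (l : 'I_m -> nat) (l0 : nat)
  (v : 'I_m -> rat) (sr : 'I_m -> int) (s0 : nat) (s : nat) : R :=
  (\prod_(r < m) \prod_(sig < l r)
      poch ((ratr (v r) - (sr r)%:~R + sig%:R) / (l r)%:R) s)
  / \prod_(t < l0) poch (((s0 + t.+1)%:R) / l0%:R) s.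

(* F(lambda) = lambda^{s0} sum_s c_s lambda^{s l0}, as a lambda-coefficient sequence *)
Definition Fser (R : numFieldType) (m : nat) (l : 'I_m -> nat) (l0 : nat)
  (v : 'I_m -> rat) (sr : 'I_m -> int) (s0 : nat) : nat -> R :=
  fun k => if (s0 <= k)%N && (l0 %| k - s0)%N
           then Fcoef R l l0 v sr s0 ((k - s0) %/ l0)%N else 0.

(* delta_x = x d/dx acts on x^{k/l0} = lambda^k by multiplication by k/l0 *)
Definition delta_x (R : numFieldType) (l0 : nat) (f : nat -> R) : nat -> R :=
  fun k => (k%:R / l0%:R) * f k.

(* multiplication by x = lambda^l0 *)
Definition mul_x (R : numFieldType) (l0 : nat) (f : nat -> R) : nat -> R :=
  fun k => if (k < l0)%N then 0 else f (k - l0)%N.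

Definition delta_plus (R : numFieldType) (l0 : nat) (c : R) (f : nat -> R) : nat -> R :=
  fun k => delta_x l0 f k + c * f k.

Definition hyp_op (R : numFieldType) (l0 : nat) (betas alphas : seq R)
  (f : nat -> R) : nat -> R :=
  fun k => foldr (fun b g => delta_plus l0 (b - 1) g) f betas k
           - mul_x l0 (foldr (fun al g => delta_plus l0 al g) f alphas) k.

Definition removed (n m : nat) (l0 : nat) (sB : seq 'rV[int]_n)
  (v : 'rV[int]_n -> 'I_m -> rat) (s0 : 'rV[int]_n -> nat) (bi : 'rV[int]_n)
  : seq rat :=
  [seq 1 - (s0 b)%:R / l0%:R | b <- sB & ~~ interiorb v b && (b != bi)].

Definition beta_list (n m : nat) (l0 : nat) (sB : seq 'rV[int]_n)
  (v : 'rV[int]_n -> 'I_m -> rat) (s0 : 'rV[int]_n -> nat) (bi : 'rV[int]_n)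
  : seq rat :=
  [seq x <- [seq (k.+1)%:R / l0%:R | k <- iota 0 l0]
     | x \notin removed l0 sB v s0 bi].

Definition alpha_list (n m : nat) (l : 'I_m -> nat) (l0 : nat) (sB : seq 'rV[int]_n)
  (v : 'rV[int]_n -> 'I_m -> rat) (s0 : 'rV[int]_n -> nat) (bi : 'rV[int]_n)
  : seq rat :=
  foldl (fun s x => rem x s)
    (flatten [seq [seq (v bi r + sig%:R) / (l r)%:R | sig <- iota 0 (l r)]
              | r <- enum 'I_m])
    (removed l0 sB v s0 bi).

(* Main.v *)
Require Import Defs.
From HB Require Import structures.
From mathcomp Require Import all_boot all_order all_algebra.
From mathcomp Require Import ring zify lra.
Import Order.TTheory GRing.Theory Num.Theory.
Local Open Scope ring_scope.

Lemma foldl_rem_perm (T : eqType) (t s : seq T) :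
  uniq t -> {subset t <= s} ->
  perm_eq s (foldl (fun s x => rem x s) s t ++ t).
Proof.
elim: t s => [|x t IH] s /=; first by rewrite cats0.
move=> /andP[xt ut] sub.
have sub' : {subset t <= rem x s}.
  move=> y yt; apply: rem_mem; last by apply: sub; rewrite inE yt orbT.
  by apply/eqP => eyx; rewrite -eyx yt in xt.
have := IH (rem x s) ut sub'.
move=> H.
apply: perm_trans (perm_to_rem (sub x (mem_head _ _))) _.
set F := foldl _ _ _.
rewrite perm_sym -cat1s (perm_catCA F [:: x] t) /= perm_cons perm_sym.
exact: H.
Qed.

Lemma pochS (R : pzRingType) (x : R) s : poch x s.+1 = poch x s * (x + s%:R).
Proof. by rewrite /poch big_ord_recr. Qed.

Lemma poch0 (R : pzRingType) (x : R) : poch x 0 = 1.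
Proof. by rewrite /poch big_ord0. Qed.

Lemma foldr_delta (R : numFieldType) l0 (cs : seq R) f k :
  foldr (fun c g => delta_plus l0 c g) f cs k =
  (\prod_(c <- cs) (k%:R / l0%:R + c)) * f k.
Proof.
elim: cs => [|c cs IH] /=; first by rewrite big_nil mul1r.
by rewrite /delta_plus /delta_x IH big_cons; ring.
Qed.

Lemma gcd_div m (l : 'I_m -> nat) l0 d :
  gcdn l0 (\big[gcdn/0%N]_(r < m) l r) = 1%N ->
  (forall r, l0 %| d * l r)%N -> (l0 %| d)%N.
Proof.
move=> hg hd.
have : (l0 %| d * \big[gcdn/0%N]_(r < m) l r)%N.
  apply: (big_ind (fun x => l0 %| d * x)%N).
  - by rewrite muln0 dvdn0.
  - by move=> x y hx hy; rewrite muln_gcdr dvdn_gcd hx hy.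
  - by move=> r _; exact: hd.
by rewrite Gauss_dvdl // /coprime hg.
Qed.

Lemma foldr_delta1 (R : numFieldType) l0 (cs : seq R) f k :
  foldr (fun c g => delta_plus l0 (c - 1) g) f cs k =
  (\prod_(c <- cs) (k%:R / l0%:R + (c - 1))) * f k.
Proof.
elim: cs => [|c cs IH] /=; first by rewrite big_nil mul1r.
by rewrite /delta_plus /delta_x IH big_cons; ring.
Qed.

Lemma ratvD n (x y : 'rV[int]_n) : ratv (x + y) = ratv x + ratv y.
Proof. by apply/rowP => j; rewrite !mxE rmorphD. Qed.
Lemma ratvN n (x : 'rV[int]_n) : ratv (- x) = - ratv x.
Proof. by apply/rowP => j; rewrite !mxE rmorphN. Qed.
Lemma ratvB n (x y : 'rV[int]_n) : ratv (x - y) = ratv x - ratv y.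
Proof. by rewrite ratvD ratvN. Qed.
Lemma ratvMz n (x : 'rV[int]_n) z : ratv (x *~ z) = z%:~R *: ratv x.
Proof. by rewrite -scaler_int intz; apply/rowP => j; rewrite !mxE rmorphM. Qed.
Lemma ratvMn n (x : 'rV[int]_n) k : ratv (x *+ k) = k%:R *: ratv x.
Proof. by rewrite -scaler_nat; apply/rowP => j; rewrite !mxE rmorphM /= natz. Qed.
Lemma ratv_sum n I (s : seq I) (F : I -> 'rV[int]_n) :
  ratv (\sum_(i <- s) F i) = \sum_(i <- s) ratv (F i).
Proof.
elim: s => [|x s IH]; first by rewrite !big_nil; apply/rowP => j; rewrite !mxE.
by rewrite !big_cons ratvD IH.
Qed.
Lemma ratv_inj n : injective (@ratv n).
Proof.
move=> x y /rowP H; apply/rowP => j; move: (H j); rewrite !mxE.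
exact: intr_inj.
Qed.

Lemma coord_uniq n m (a : 'I_m -> 'rV[int]_n) (x y : 'I_m -> rat) :
  row_free (Amx a) ->
  \sum_(r < m) x r *: ratv (a r) = \sum_(r < m) y r *: ratv (a r) ->
  forall r, x r = y r.
Proof.
move=> hA H.
have E z : \sum_(r < m) z r *: ratv (a r) = (\row_r z r) *m Amx a.
  apply/rowP => j; rewrite !mxE summxE; apply: eq_bigr => r _.
  by rewrite !mxE.
move: H; rewrite !E => /(row_free_inj hA) /rowP H r.
by move: (H r); rewrite !mxE.
Qed.

Lemma int_small (z : int) : -1 < (z%:~R : rat) < 1 -> z = 0.
Proof.
move=> /andP[h1 h2].
have h1' : -1 < z by rewrite -(ltr_int rat) /= -[(-1)%:~R]/(-1 : rat) ; exact: h1.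
have h2' : z < 1 by rewrite -(ltr_int rat); exact: h2.
lia.
Qed.

Lemma L_int m (l : 'I_m -> nat) l0 (d : nat) :
  gcdn l0 (\big[gcdn/0%N]_(r < m) l r) = 1%N -> (0 < l0)%N ->
  (forall r, exists z : int, (d%:R * (l r)%:R / l0%:R : rat) = z%:~R) ->
  (l0 %| d)%N.
Proof.
move=> hg hl0 H; apply: (@gcd_div m l l0 d hg) => r.
have [z hz] := H r.
have l0n0 : (l0%:R : rat) != 0 by rewrite pnatr_eq0 -lt0n.
have e : ((d * l r)%N%:R : rat) = (z * l0%:Z)%:~R.
  rewrite natrM rmorphM /= -hz; field; exact: l0n0.
have e' : (d * l r)%N%:Z = z * l0%:Z by apply: (@intr_inj rat); rewrite -e.
have : `|(d * l r)%N%:Z|%N = (`|z| * l0)%N by rewrite e' abszM.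
rewrite absz_nat => ->; exact: dvdn_mull.
Qed.

Lemma L_eq m (l : 'I_m -> nat) l0 (s t : nat) :
  gcdn l0 (\big[gcdn/0%N]_(r < m) l r) = 1%N -> (0 < l0)%N ->
  (s < l0)%N -> (t < l0)%N ->
  (forall r, exists z : int, ((s%:R - t%:R) * (l r)%:R / l0%:R : rat) = z%:~R) ->
  s = t.
Proof.
move=> hg hl0 hs ht H.
case: (leqP t s) => hts.
  have : (l0 %| s - t)%N.
    apply: (@L_int m l l0 _ hg hl0) => r; have [z hz] := H r.
    by exists z; rewrite natrB.
  move=> hd; case: (posnP (s - t)) => [|hp]; first lia.
  have := dvdn_leq hp hd; lia.
have : (l0 %| t - s)%N.
  apply: (@L_int m l l0 _ hg hl0) => r; have [z hz] := H r.
  exists (- z); rewrite natrB ?(ltnW hts) // rmorphN /= -hz; ring.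
move=> hd; case: (posnP (t - s)) => [|hp]; first lia.
have := dvdn_leq hp hd; lia.
Qed.

Lemma dvd_small (l0 x : nat) : (l0 %| x)%N -> (x < l0)%N -> x = 0%N.
Proof.
move=> hd hx; case: (posnP x) => // hp.
by have := dvdn_leq hp hd; rewrite leqNgt hx.
Qed.

Lemma key_alg (R : fieldType) (Pb Pa Q N D : R) :
  D != 0 -> Pb * Q != 0 ->
  Pb * ((N * (Pa * Q)) / (D * (Pb * Q))) - Pa * (N / D) = 0.
Proof. move=> hD; rewrite mulf_eq0 negb_or => /andP[h1 h2]; field; by rewrite hD h1 h2. Qed.

Lemma poch_gt0 (R : numDomainType) (x : R) s : 0 < x -> 0 < poch x s.
Proof.
move=> hx; rewrite /poch; apply: prodr_gt0 => i _.
by apply: ltr_wpDr => //; rewrite ler0n.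
Qed.

Lemma FcoefS (R : numFieldType) m (l : 'I_m -> nat) l0 v sr s0 s :
  Fcoef R l l0 v sr s0 s.+1 =
  ((\prod_(r < m) \prod_(sig < l r)
      poch ((ratr (v r) - (sr r)%:~R + sig%:R) / (l r)%:R) s) *
   (\prod_(r < m) \prod_(sig < l r)
      ((ratr (v r) - (sr r)%:~R + sig%:R) / (l r)%:R + s%:R))) /
  ((\prod_(t < l0) poch (((s0 + t.+1)%:R) / l0%:R) s) *
   (\prod_(t < l0) (((s0 + t.+1)%:R) / l0%:R + s%:R))).
Proof.
rewrite /Fcoef.
under eq_bigr do under eq_bigr do rewrite pochS.
under [X in _ / X]eq_bigr do rewrite pochS.
rewrite big_split /=; congr (_ / _).
rewrite -big_split /=; apply: eq_bigr => r _; exact: big_split.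
Qed.

Lemma Fcoef0 (R : numFieldType) m (l : 'I_m -> nat) l0 v sr s0 :
  Fcoef R l l0 v sr s0 0 = 1.
Proof.
rewrite /Fcoef big1 ?big1 ?invr1 ?mulr1 // => i _; first by rewrite poch0.
by rewrite big1 // => j _; rewrite poch0.
Qed.

Theorem theorem6p18 (R : numClosedFieldType) (n m : nat)
  (a : 'I_m -> 'rV[int]_n) (a0 : 'rV[int]_n) (l : 'I_m -> nat) (l0 : nat)
  (hA : row_free (Amx a))
  (hl : forall r, (0 < l r)%N) (hl0 : (0 < l0)%N)
  (hgcd : gcdn l0 (\big[gcdn/0%N]_(r < m) l r) = 1%N)
  (hrel : a0 *+ l0 = \sum_(r < m) a r *+ l r)
  (hsum : l0 = (\sum_(r < m) l r)%N)
  (bi : 'rV[int]_n) (sB : seq 'rV[int]_n)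
  (hsBuniq : uniq sB)
  (hsB : forall b, b \in sB <-> (inB a b /\ inZAplus a a0 (b - bi)))
  (hbi : bi \in sB)
  (v : 'rV[int]_n -> 'I_m -> rat) (s0 : 'rV[int]_n -> nat)
  (sr : 'rV[int]_n -> 'I_m -> int)
  (hv : forall b, b \in sB -> PA_coords a b (v b))
  (hs0 : forall b, b \in sB -> (s0 b < l0)%N)
  (hsr : forall b, b \in sB ->
           bi + a0 *+ s0 b = b - \sum_(r < m) a r *~ sr b r)
  (hbound : ~~ interiorb v bi) :
  let Rk := count (interiorb v) sB in
  let betas := beta_list l0 sB v s0 bi in
  let alphas := alpha_list l l0 sB v s0 bi in
  let sel := [seq b <- sB | interiorb v b || (b == bi)] in
  let F := fun b => Fser R l l0 (v b) (sr b) (s0 b) in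
  [/\ size betas = Rk.+1, size alphas = Rk.+1, size sel = Rk.+1,
      (forall b, b \in sel ->
         hyp_op l0 (map ratr betas) (map ratr alphas) (F b) =1 (fun _ => 0))
    & (forall c : 'rV[int]_n -> R,
         (forall k, \sum_(b <- sel) c b * F b k = 0) ->
         forall b, b \in sel -> c b = 0)].
Proof.
move=> Rk betas alphas sel F.
pose av r := ratv (a r).
have l0n0 : (l0%:R : rat) != 0 by rewrite pnatr_eq0 -lt0n.
have S1 : ratv a0 = \sum_(r < m) ((l r)%:R / l0%:R) *: av r.
  have := congr1 (@ratv n) hrel; rewrite ratvMn ratv_sum => e.
  apply: (@scalerI _ _ (l0%:R : rat)) => //.
  rewrite e scaler_sumr; apply: eq_bigr => r _.
  by rewrite ratvMn scalerA mulrCA divff // mulr1.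
have S2 : forall b, b \in sB -> forall r,
    v b r - (sr b r)%:~R = v bi r + (s0 b)%:R * (l r)%:R / l0%:R.
  move=> b hb; apply: (@coord_uniq n m a _ _ hA).
  have := congr1 (@ratv n) (hsr b hb).
  rewrite ratvD ratvB ratvMn ratv_sum S1 (proj1 (hv b hb)) (proj1 (hv bi hbi)).
  move=> e.
  under eq_bigr do rewrite scalerBl.
  rewrite sumrB.
  under [X in _ - X = _]eq_bigr do rewrite -ratvMz.
  rewrite -e scaler_sumr -big_split /=; apply: eq_bigr => r _.
  by rewrite /av scalerA -scalerDl mulrA.
have coordB : forall b b', b \in sB -> b' \in sB -> v b =1 v b' -> b = b'.
  move=> b b' hb hb' e; apply: ratv_inj.
  rewrite (proj1 (hv b hb)) (proj1 (hv b' hb')); apply: eq_bigr => r _.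
  by rewrite e.
have S3 : {in sB &, injective s0}.
  move=> b b' hb hb' e; apply: coordB => // r.
  have e1 := S2 b hb r; have e2 := S2 b' hb' r; rewrite -e in e2.
  have := int_small (sr b r - sr b' r).
  have [_ /(_ r)/andP[d1 d2]] := hv b hb; have [_ /(_ r)/andP[d3 d4]] := hv b' hb'.
  rewrite rmorphB /= => h.
  have hz : sr b r - sr b' r = 0.
    apply: h; apply/andP; split; lra.
  have : (sr b r)%:~R = (sr b' r)%:~R :> rat by rewrite (subr0_eq hz).
  lra.
have S4 : s0 bi = 0%N.
  apply: (@L_eq m l l0 (s0 bi) 0 hgcd hl0 (hs0 bi hbi) hl0) => r.
  exists (- sr bi r); have := S2 bi hbi r; rewrite subr0 rmorphN /=. lra.
have S5 : forall s, (s < l0)%N -> exists2 b, b \in sB & s0 b = s.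
  move=> s hs.
  pose w r := v bi r + s%:R * (l r)%:R / l0%:R.
  pose fl r := Num.floor (w r).
  pose b := bi + a0 *+ s - \sum_(r < m) a r *~ fl r.
  have E : ratv b = \sum_(r < m) (w r - (fl r)%:~R) *: av r.
    rewrite /b ratvB ratvD ratvMn ratv_sum S1 (proj1 (hv bi hbi)) scaler_sumr.
    rewrite -big_split /=.
    under [X in _ - X = _]eq_bigr do rewrite ratvMz.
    rewrite -sumrB; apply: eq_bigr => r _.
    by rewrite scalerA -scalerDl -scalerBl /w mulrA.
  have hbB : b \in sB.
    apply/hsB; split.
      exists (fun r => w r - (fl r)%:~R); split => // r.
      have := floor_itv (w r); rewrite -/(fl r) rmorphD /= => /andP[f1 f2].
      apply/andP; split; lra.
    exists (s%:Z), (fun r => - fl r).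
    rewrite /b addrC !addrA addNr add0r; congr (_ + _).
    by rewrite -sumrN; apply: eq_bigr => r _; rewrite mulrNz.
  exists b => //.
  apply: esym; apply: (@L_eq m l l0 s (s0 b) hgcd hl0 hs (hs0 b hbB)) => r.
  exists (fl r + sr b r).
  have e1 := S2 b hbB r.
  have e2 : v b r = w r - (fl r)%:~R.
    apply: (@coord_uniq n m a (v b) (fun r => w r - (fl r)%:~R) hA _ r).
    rewrite -E; exact: (esym (proj1 (hv b hbB))).
  move: e1; rewrite e2 /w rmorphD /=. move=> e1.
  have -> : (s%:R - (s0 b)%:R) * (l r)%:R / l0%:R =
            s%:R * (l r)%:R / l0%:R - (s0 b)%:R * (l r)%:R / l0%:R :> rat by field.
  lra.
have S6 : size sB = l0.
  have P : perm_eq (map s0 sB) (iota 0 l0).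
    apply: uniq_perm; first by rewrite (map_inj_in_uniq S3).
      exact: iota_uniq.
    move=> x; rewrite mem_iota add0n /=; apply/idP/idP.
      by move=> /mapP[b hb ->]; exact: hs0.
    by move=> hx; have [b hb <-] := S5 x hx; exact: map_f.
  by have := perm_size P; rewrite size_map size_iota.
pose rmv := removed l0 sB v s0 bi.
pose FT := [seq (k.+1)%:R / l0%:R : rat | k <- iota 0 l0].
pose FA := flatten [seq [seq (v bi r + sig%:R) / (l r)%:R | sig <- iota 0 (l r)]
                   | r <- enum 'I_m].
have betas_def : betas = [seq x <- FT | x \notin rmv] by [].
have alphas_def : alphas = foldl (fun s x => rem x s) FA rmv by [].
have R1 : uniq rmv.
  rewrite /rmv /removed map_inj_in_uniq ?filter_uniq //.
  move=> b b' hb hb' e; apply: S3; rewrite ?(mem_filter _ _ b) ?(mem_filter _ _ b').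
  - by move: hb; rewrite mem_filter => /andP[].
  - by move: hb'; rewrite mem_filter => /andP[].
  have : ((s0 b)%:R / l0%:R : rat) = (s0 b')%:R / l0%:R by lra.
  by move/(mulIf (invr_neq0 l0n0))/eqP; rewrite eqr_nat => /eqP.
have memR : forall x, x \in rmv -> exists b, [/\ b \in sB, ~~ interiorb v b,
      b != bi & x = 1 - (s0 b)%:R / l0%:R].
  move=> x /mapP[b]; rewrite mem_filter => /andP[/andP[h1 h2] h3] ->.
  by exists b.
have R2 : {subset rmv <= FT}.
  move=> x /memR[b [hb _ _ ->]].
  apply/mapP; exists (l0 - s0 b).-1.
    rewrite mem_iota add0n; have := hs0 b hb; lia.
  have hsb := hs0 b hb.
  rewrite prednK ?subn_gt0 // natrB ?(ltnW hsb) //; field; exact: l0n0.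
have R3 : {subset rmv <= FA}.
  move=> x /memR[b [hb hnint hnbi ->]].
  move: hnint; rewrite /interiorb negb_forall => /existsP[r].
  rewrite -leNgt => hvr.
  have [_ /(_ r)/andP[d1 d2]] := hv b hb.
  have [_ /(_ r)/andP[e1 e2]] := hv bi hbi.
  have vb0 : v b r = 0 by apply/eqP; rewrite eq_le hvr d1.
  have e := S2 b hb r; rewrite vb0 sub0r in e.
  have hsb := hs0 b hb.
  have lr0 : ((l r)%:R : rat) != 0 by rewrite pnatr_eq0 -lt0n.
  have t1 : 0 <= ((s0 b)%:R / l0%:R : rat) by rewrite divr_ge0 ?ler0n.
  have t2 : ((s0 b)%:R / l0%:R : rat) < 1.
    by rewrite ltr_pdivrMr ?ltr0n // mul1r ltr_nat.
  have lrp : 0 < ((l r)%:R : rat) by rewrite ltr0n.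
  have ee : - (sr b r)%:~R = v bi r + ((s0 b)%:R / l0%:R) * (l r)%:R :> rat.
    by rewrite e; field.
  have tl0 : 0 <= ((s0 b)%:R / l0%:R : rat) * (l r)%:R by rewrite mulr_ge0 // ltW.
  have tl1 : ((s0 b)%:R / l0%:R : rat) * (l r)%:R <= (l r)%:R.
    by rewrite ler_piMl // ?ltW.
  have Nge0 : 0 <= - sr b r.
    by rewrite -(ler_int rat) rmorphN /= ee; lra.
  pose nn := `|- sr b r|%N.
  have hnn : (nn%:R : rat) = v bi r + ((s0 b)%:R / l0%:R) * (l r)%:R.
    by rewrite -ee -[nn%:R]/((nn%:Z)%:~R) /nn gez0_abs // rmorphN.
  have nn1 : (0 < nn)%N.
    rewrite lt0n; apply/negP => /eqP nn0.
    move: hnn; rewrite nn0 => h0.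
    have hs0z' : ((s0 b)%:R / l0%:R : rat) * (l r)%:R = 0 by lra.
    have hs0z : ((s0 b)%:R / l0%:R : rat) = 0.
      by move: hs0z' => /eqP; rewrite mulf_eq0 (negPf lr0) orbF => /eqP.
    have : s0 b = s0 bi.
      rewrite S4; apply/eqP; rewrite -(eqr_nat rat); apply/eqP.
      by move: hs0z => /eqP; rewrite mulf_eq0 invr_eq0 (negPf l0n0) orbF => /eqP.
    by move/(S3 _ _ hb hbi)/eqP; rewrite (negPf hnbi).
  have nnl : (nn <= l r)%N.
    rewrite -ltnS -(ltr_nat rat) -addn1 natrD hnn; lra.
  apply/flattenP.
  exists [seq (v bi r + sig%:R) / (l r)%:R | sig <- iota 0 (l r)].
    by apply: map_f; rewrite mem_enum.
  apply/mapP; exists (l r - nn)%N.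
    by rewrite mem_iota add0n ltn_subrL nn1 hl.
  rewrite natrB // hnn; field; apply/andP; split => //.
have FTu : uniq FT.
  rewrite map_inj_in_uniq ?iota_uniq // => x y _ _ e.
  have : (x.+1%:R : rat) = y.+1%:R by move: e => /(mulIf (invr_neq0 l0n0)).
  by move/eqP; rewrite eqr_nat eqSS => /eqP.
have PT : perm_eq FT (betas ++ rmv).
  rewrite betas_def -(perm_filterC (fun x => x \notin rmv) FT) perm_cat2l.
  apply: uniq_perm; [exact: filter_uniq | exact: R1 |].
  move=> x; rewrite mem_filter /= negbK; apply/andP/idP => [[]//|h].
  by split => //; exact: R2.
have PA : perm_eq FA (alphas ++ rmv) by rewrite alphas_def; exact: foldl_rem_perm.
have sFT : size FT = l0 by rewrite size_map size_iota.
have sFA : size FA = l0.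
  rewrite size_flatten /shape -map_comp sumnE big_map hsum big_enum /=.
  by apply: eq_bigr => r _; rewrite /= size_map size_iota.
have c1 : (count (interiorb v) sB + count (predC (interiorb v)) sB)%N = l0.
  by rewrite count_predC S6.
have c2 : size rmv = count (fun b => ~~ interiorb v b && (b != bi)) sB.
  by rewrite size_map size_filter.
have cB : count (fun b => ~~ interiorb v b && (b == bi)) sB = 1%N.
  transitivity (count_mem bi sB); last by rewrite (count_uniq_mem bi hsBuniq) hbi.
  apply: eq_count => b /=.
  by case: eqP => [->|]; rewrite ?hbound ?andbF ?andbT.
have c3 : count (predC (interiorb v)) sB =
          (count (fun b => ~~ interiorb v b && (b != bi)) sB +
           count (fun b => ~~ interiorb v b && (b == bi)) sB)%N.
  rewrite -count_predUI.
  have -> : count (predI (fun b => ~~ interiorb v b && (b != bi))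
               (fun b => ~~ interiorb v b && (b == bi))) sB = 0%N.
    by apply/eqP; rewrite -leqn0 leqNgt -has_count; apply/hasPn => b _ /=; case: eqP; rewrite !andbF.
  rewrite addn0; apply: eq_count => b /=; by case: eqP; rewrite ?andbT ?andbF ?orbF.
have sbeta : size betas = Rk.+1.
  have := perm_size PT; rewrite size_cat sFT c2 => h.
  rewrite /Rk; move: c1; rewrite c3 cB => c1.
  apply/eqP; rewrite -(eqn_add2r (count (fun b => ~~ interiorb v b && (b != bi)) sB)) -h -c1.
  by rewrite addn1 addnS addSn.
have salpha : size alphas = Rk.+1.
  have := perm_size PA; rewrite size_cat sFA c2 => h.
  rewrite /Rk; move: c1; rewrite c3 cB => c1.
  apply/eqP; rewrite -(eqn_add2r (count (fun b => ~~ interiorb v b && (b != bi)) sB)) -h -c1.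
  by rewrite addn1 addnS addSn.
have ssel : size sel = Rk.+1.
  rewrite size_filter /Rk.
  have h := count_predUI (interiorb v) (pred1 bi) sB.
  have h0 : count (predI (interiorb v) (pred1 bi)) sB = 0%N.
    by apply/eqP; rewrite -leqn0 leqNgt -has_count; apply/hasPn => b _ /=; case: eqP => [->|]; rewrite ?andbF ?(negPf hbound).
  rewrite h0 addn0 (count_uniq_mem bi hsBuniq) hbi in h.
  by rewrite addn1 in h; rewrite -h.
have l0R : (l0%:R : R) != 0 by rewrite pnatr_eq0 -lt0n.
have ratrS2 : forall b, b \in sB -> forall r,
    ratr (v b r) - (sr b r)%:~R = ratr (v bi r) + (s0 b)%:R * (l r)%:R / l0%:R :> R.
  move=> b hb r; have := congr1 (@ratr R) (S2 b hb r).
  by rewrite rmorphB rmorphD /= ratr_int fmorph_div rmorphM /= !ratr_nat.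
split => //.
- move=> b; rewrite mem_filter => /andP[hib hb] k.
  have hsb := hs0 b hb.
  have hbeta : (1 - (s0 b)%:R / l0%:R) \in betas.
    rewrite betas_def mem_filter; apply/andP; split.
      apply/negP => /memR[b' [hb' hni hne e]].
      have es : s0 b' = s0 b.
        have : ((s0 b)%:R / l0%:R : rat) = (s0 b')%:R / l0%:R by lra.
        by move/(mulIf (invr_neq0 l0n0))/eqP; rewrite eqr_nat => /eqP.
      have eb := S3 _ _ hb' hb es; rewrite eb in hni hne.
      by move: hib; rewrite (negPf hni) (negPf hne).
    apply/mapP; exists (l0 - s0 b).-1.
      by rewrite mem_iota add0n prednK ?subn_gt0 // leq_subr.
    rewrite prednK ?subn_gt0 // natrB ?(ltnW hsb) //; field; exact: l0n0.
  rewrite /hyp_op foldr_delta1 /mul_x foldr_delta /F /Fser.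
  case: (ltnP k l0) => hk.
    rewrite subr0; case: ifP => [/andP[h1 h2]|_]; last by rewrite mulr0.
    have kk : k = s0 b.
      have := dvd_small _ _ h2 (leq_ltn_trans (leq_subr _ _) hk).
      move/eqP; rewrite subn_eq0 => h3; apply/eqP; by rewrite eqn_leq h1 h3.
    rewrite (big_rem (ratr (1 - (s0 b)%:R / l0%:R))) ?map_f //= kk.
    rewrite rmorphB rmorph1 fmorph_div /= !rmorph_nat.
    have -> : ((s0 b)%:R / l0%:R + (1 - (s0 b)%:R / l0%:R - 1) : R) = 0 by ring.
    by rewrite !mul0r.
  case: (leqP (s0 b + l0) k) => hk2.
    have e1 : (s0 b <= k)%N := leq_trans (leq_addr l0 (s0 b)) hk2.
    have e2 : (s0 b <= k - l0)%N by rewrite leq_subRL // addnC.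
    have ekk : (k - s0 b = (k - l0 - s0 b) + l0)%N.
      by rewrite subnAC subnK // leq_subRL // addnC.
    rewrite e1 e2 /= ekk (dvdn_addl _ (dvdnn l0)).
    case: ifP => hd; last by rewrite !mulr0 subr0.
    have [q hq] := dvdnP hd.
    rewrite hq (_ : (q * l0 + l0 = q.+1 * l0)%N) ?mulnK //; last by rewrite mulSn addnC.
    pose X : R := (s0 b)%:R / l0%:R + q%:R.
    have hk1 : (k%:R / l0%:R : R) = X + 1.
      by rewrite -(subnK e1) ekk hq !natrD natrM /X; field.
    have hk0 : ((k - l0)%:R / l0%:R : R) = X.
      by rewrite -(subnK e2) hq natrD natrM /X; field.
    rewrite hk1 hk0 FcoefS.
    have eA : \prod_(r < m) \prod_(sig < l r)
                ((ratr (v b r) - (sr b r)%:~R + sig%:R) / (l r)%:R + q%:R)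
              = \prod_(al <- alphas) (X + ratr al) * \prod_(rh <- rmv) (X + ratr rh).
      rewrite -big_cat -(perm_big _ PA) /FA big_flatten big_map big_enum /=.
      apply: eq_bigr => r _.
      rewrite big_map (_ : iota 0 (l r) = index_iota 0 (l r)); last by rewrite /index_iota subn0.
      rewrite big_mkord; apply: eq_bigr => sig _.
      have lrR : ((l r)%:R : R) != 0 by rewrite pnatr_eq0 -lt0n.
      rewrite fmorph_div rmorphD /= !rmorph_nat ratrS2 // /X.
      by field; rewrite ?lrR ?l0R.
    have eB : \prod_(t < l0) ((s0 b + t.+1)%:R / l0%:R + q%:R)
              = \prod_(be <- betas) (X + ratr be) * \prod_(rh <- rmv) (X + ratr rh) :> R.
      rewrite -big_cat -(perm_big _ PT) /FT big_map.
      rewrite (_ : iota 0 l0 = index_iota 0 l0); last by rewrite /index_iota subn0.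
      rewrite big_mkord; apply: eq_bigr => t _.
      rewrite fmorph_div !rmorph_nat /X natrD.
      by field; rewrite ?l0R.
    have hB : \prod_(t < l0) ((s0 b + t.+1)%:R / l0%:R + q%:R) != 0 :> R.
      apply: lt0r_neq0; apply: prodr_gt0 => t _.
      by apply: ltr_wpDr; rewrite ?ler0n // divr_gt0 ?ltr0n ?addnS.
    have hD : \prod_(t < l0) poch ((s0 b + t.+1)%:R / l0%:R) q != 0 :> R.
      apply: lt0r_neq0; apply: prodr_gt0 => t _; apply: poch_gt0.
      by rewrite divr_gt0 ?ltr0n ?addnS.
    have ePb : \prod_(c <- map ratr betas) (X + 1 + (c - 1)) = \prod_(be <- betas) (X + ratr be) :> R.
      by rewrite big_map; apply: eq_bigr => c _; ring.
    have ePa : \prod_(c <- map ratr alphas) (X + c) = \prod_(al <- alphas) (X + ratr al) :> R.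
      by rewrite big_map.
    rewrite ePb ePa eA eB; rewrite eB in hB.
    exact: key_alg.
  have -> : (s0 b <= k - l0)%N = false by rewrite leq_subRL // addnC leqNgt hk2.
  rewrite andFb mulr0 subr0.
  case: ifP => [/andP[h1 h2]|_]; last by rewrite mulr0.
  have hlt : (k - s0 b < l0)%N by rewrite ltn_subLR.
  have := dvd_small _ _ h2 hlt.
  move/eqP; rewrite subn_eq0 => h3.
  by have := leq_ltn_trans h3 hsb; rewrite ltnNge hk.
- move=> c H b0 hsel0.
  have hb0 : b0 \in sB by move: hsel0; rewrite mem_filter => /andP[].
  have := H (s0 b0); rewrite (big_rem b0 hsel0) /=.
  rewrite big1_seq; last first.
    move=> b /andP[_ hbr].
    have selu : uniq sel by exact: filter_uniq.
    move: hbr; rewrite (mem_rem_uniq _ selu) inE => /andP[hne hbs].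
    have hb : b \in sB by move: hbs; rewrite mem_filter => /andP[].
    rewrite /F /Fser; case: ifP => [/andP[h1 h2]|_]; last by rewrite mulr0.
    have := dvd_small _ _ h2 (leq_ltn_trans (leq_subr _ _) (hs0 b0 hb0)).
    move/eqP; rewrite subn_eq0 => h3.
    have es : s0 b = s0 b0 by apply/eqP; rewrite eqn_leq h1 h3.
    by have := S3 _ _ hb hb0 es => eb; rewrite eb eqxx in hne.
  rewrite addr0 /F /Fser leqnn subnn dvdn0 div0n Fcoef0 mulr1.
  by [].
Qed.
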